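(* Let $S$ be a smooth cubic surface over a field $K$. Suppose $S$ contains a skew pair of $K$-lines $\ell,\ell'$, and let $P\in\ell(K)$ be such that $\Gamma_P$ is the union of $\ell$ and a conic that is irreducible over $K$. Then the point $\ell'\cap\Pi_P$ is not an Eckardt point.
   Context: A smooth cubic surface $S$ over $K$ is a nonsingular surface in $\mathbb{P}^3$ defined by a homogeneous cubic over $K$. A $K$-line is a line in $\mathbb{P}^3$ defined over $K$; lines ''on $S$'' are lines over $\overline{K}$ contained in $S$. A skew pair of lines is a pair of disjoint lines. An Eckardt point is a point of $S$ through which three of the lines on $S$ pass. For $P\in S(\overline{K})$, $\Pi_P$ is the tangent plane to $S$ at $P$ and $\Gamma_P=S\cap\Pi_P$ (a plane cubic curve). *)

(* Defs.v *)
From HB Require Import structures.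
From mathcomp Require Import all_boot all_order all_algebra.
Set Implicit Arguments. Unset Strict Implicit. Unset Printing Implicit Defensive.
Import Order.TTheory GRing.Theory Num.Theory.
Local Open Scope ring_scope.

(* Points of P^3 over a field R are nonzero row vectors x : 'rV[R]_4 (up to
   scaling); a line is the row space of a rank-2 matrix B : 'M[R]_(2,4);
   a point x lies on B iff (x <= B)%MS. *)

(* A homogeneous cubic form in x_0..x_3, given by coefficients:
   F(x) = sum_{i,j,k} c i j k x_i x_j x_k  (every cubic form is of this shape). *)
Definition cubic (R : Type) := 'I_4 -> 'I_4 -> 'I_4 -> R.
(* A quadratic form: Q(x) = sum_{i,j} q i j x_i x_j. *)
Definition quad (R : Type) := 'I_4 -> 'I_4 -> R.

Definition cmap (R S : Type) (f : R -> S) (c : cubic R) : cubic S :=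
  fun i j k => f (c i j k).
Definition qmap (R S : Type) (f : R -> S) (q : quad R) : quad S :=
  fun i j => f (q i j).

Definition ceval (R : comNzRingType) (c : cubic R) (x : 'rV[R]_4) : R :=
  \sum_(i < 4) \sum_(j < 4) \sum_(k < 4) c i j k * x 0 i * x 0 j * x 0 k.
Definition qeval (R : comNzRingType) (q : quad R) (x : 'rV[R]_4) : R :=
  \sum_(i < 4) \sum_(j < 4) q i j * x 0 i * x 0 j.
Definition leval (R : comNzRingType) (a x : 'rV[R]_4) : R :=
  \sum_(i < 4) a 0 i * x 0 i.

Definition cderiv (R : comNzRingType) (c : cubic R) (m : 'I_4) (x : 'rV[R]_4) : R :=
  \sum_(i < 4) \sum_(j < 4) \sum_(k < 4) c i j k *
    ((i == m)%:R * (x 0 j * x 0 k) + (j == m)%:R * (x 0 i * x 0 k)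
     + (k == m)%:R * (x 0 i * x 0 j)).
(* gradient; the tangent plane at a smooth point P is {x | leval (grad c P) x = 0} *)
Definition grad (R : comNzRingType) (c : cubic R) (x : 'rV[R]_4) : 'rV[R]_4 :=
  \row_m cderiv c m x.

Definition smooth_cubic (L : fieldType) (c : cubic L) : Prop :=
  forall x : 'rV[L]_4, x != 0 -> ceval c x = 0 -> grad c x != 0.

Definition line_on (L : fieldType) (c : cubic L) (B : 'M[L]_(2,4)) : Prop :=
  \rank B = 2%N /\ forall y : 'rV[L]_4, (y <= B)%MS -> ceval c y = 0.

Definition eckardt (L : fieldType) (c : cubic L) (x : 'rV[L]_4) : Prop :=
  x != 0 /\
  exists B1 B2 B3 : 'M[L]_(2,4),
    [/\ line_on c B1, line_on c B2, line_on c B3,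
        [/\ (x <= B1)%MS, (x <= B2)%MS & (x <= B3)%MS] &
        [/\ ~~ (B1 == B2)%MS, ~~ (B1 == B3)%MS & ~~ (B2 == B3)%MS]].

(* A is a K-line (defined over K) contained in S, geometric lines taken in L. *)
Definition Kline_on (K L : fieldType) (f : {rmorphism K -> L}) (c : cubic K)
  (A : 'M[K]_(2,4)) : Prop :=
  \rank A = 2%N /\ line_on (cmap f c) (map_mx f A).

Definition skew_lines (L : fieldType) (B B' : 'M[L]_(2,4)) : Prop :=
  forall y : 'rV[L]_4, (y <= B)%MS -> (y <= B')%MS -> y = 0.

(* Gamma_P = S cap Pi_P is the union of the K-line A and a conic that is
   irreducible over K: writing lam = grad c p for the equation of Pi_P, there
   are K-forms m (linear), q, g (quadratic) with {lam = 0, m = 0} = A and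
   F = m q + lam g (so F|_{Pi_P} = m|_{Pi_P} * q|_{Pi_P}), and q|_{Pi_P}
   is irreducible over K, i.e. not of the form a b + lam e with a, b, e
   K-linear forms (this also excludes q|_{Pi_P} = 0).  Polynomial identities
   are expressed as identities of functions on L^4 (L is infinite). *)
Definition section_line_plus_Kirred_conic (K L : fieldType)
  (f : {rmorphism K -> L}) (c : cubic K) (p : 'rV[K]_4) (A : 'M[K]_(2,4)) : Prop :=
  let lam := grad c p in
  exists (m : 'rV[K]_4) (q g : quad K),
    [/\ \rank (col_mx lam m) = 2%N,
        A *m m^T = 0,
        (forall x : 'rV[L]_4,
            ceval (cmap f c) x =
            leval (map_mx f m) x * qeval (qmap f q) x
            + leval (map_mx f lam) x * qeval (qmap f g) x) &
        ~ (exists a b e : 'rV[K]_4, forall x : 'rV[L]_4,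
              qeval (qmap f q) x =
              leval (map_mx f a) x * leval (map_mx f b) x
              + leval (map_mx f lam) x * leval (map_mx f e) x)].

(* Main.v *)
Require Import Defs.
From HB Require Import structures.
From mathcomp Require Import all_boot all_order all_algebra.
From mathcomp Require Import ring.
Import GRing.Theory.
Set Implicit Arguments. Unset Strict Implicit. Unset Printing Implicit Defensive.
Local Open Scope ring_scope.

Lemma avoid (L : closedFieldType) (s : seq L) : exists t, t \notin s.
Proof.
set P := \prod_(x <- s) ('X - x%:P).
have mP : P \is monic by apply: monic_prod_XsubC.
have P0 : P != 0 by apply: monic_neq0.
have szX : size (P * 'X) = (size P).+1 by rewrite size_mulX.
have szP : (0 < size P)%N by rewrite size_poly_gt0.
have sz : size (P * 'X + 1) = (size P).+1.
  by rewrite size_polyDl szX // size_poly1 ltnS.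
have : size (P * 'X + 1) != 1 by rewrite sz eqSS -lt0n.
case/closed_rootP => t; rewrite /root !hornerE => Ht.
exists t; apply/negP => ts.
have : P.[t] = 0 by apply/rootP; rewrite root_prod_XsubC.
by move=> H0; move: Ht; rewrite H0 mul0r add0r oner_eq0.
Qed.

Lemma cubic0 (L : closedFieldType) (a b c d : L) :
  (forall t, a + b * t + c * t ^+ 2 + d * t ^+ 3 = 0) ->
  [/\ a = 0, b = 0, c = 0 & d = 0].
Proof.
move=> H.
set p := \poly_(i < 4) [:: a; b; c; d]`_i.
have Hp t : p.[t] = 0.
  rewrite horner_poly !big_ord_recr big_ord0 /= add0r expr0 expr1 mulr1.
  exact: H.
have [t1 _] := avoid (L:=L) [::].
have [t2 H2] := avoid [:: t1].
have [t3 H3] := avoid [:: t1; t2].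
have [t4 H4] := avoid [:: t1; t2; t3].
have p0 : p = 0.
  apply/eqP; apply/negPn/negP => pn0.
  have := max_poly_roots pn0 (rs := [:: t1; t2; t3; t4]).
  rewrite /= !(rootE, Hp) eqxx /=.
  move: H2 H3 H4; rewrite !inE !negb_or => H2 /andP[H31 H32] /andP[H41 /andP[H42 H43]].
  rewrite eq_sym in H2; rewrite eq_sym in H31; rewrite eq_sym in H32; rewrite eq_sym in H41; rewrite eq_sym in H42; rewrite eq_sym in H43.
  rewrite H2 H31 H32 H41 H42 H43.
  move/(_ isT isT); rewrite ltnNge => /negP; apply.
  exact: size_poly.
have cf i : p`_i = 0 by rewrite p0 coef0.
move: (cf 0%N) (cf 1%N) (cf 2%N) (cf 3%N); rewrite !coef_poly /=.
by move=> -> -> -> ->.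
Qed.

Definition T3 (R : comNzRingType) (c : cubic R) (a b d : 'rV[R]_4) : R :=
  \sum_(i < 4) \sum_(j < 4) \sum_(k < 4) c i j k * a 0 i * b 0 j * d 0 k.
Definition Qb (R : comNzRingType) (q : quad R) (a b : 'rV[R]_4) : R :=
  \sum_(i < 4) \sum_(j < 4) q i j * a 0 i * b 0 j.

Lemma T3D1 (R : comNzRingType) (c : cubic R) (a1 a2 b d : 'rV[R]_4) :
  T3 c (a1 + a2) b d = T3 c a1 b d + T3 c a2 b d.
Proof.
rewrite /T3 -big_split; apply: eq_bigr => i _; rewrite -big_split.
apply: eq_bigr => j _; rewrite -big_split; apply: eq_bigr => k _ /=.
rewrite !mxE; ring.
Qed.
Lemma T3D2 (R : comNzRingType) (c : cubic R) (a1 a2 b d : 'rV[R]_4) :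
  T3 c b (a1 + a2) d = T3 c b a1 d + T3 c b a2 d.
Proof.
rewrite /T3 -big_split; apply: eq_bigr => i _; rewrite -big_split.
apply: eq_bigr => j _; rewrite -big_split; apply: eq_bigr => k _ /=.
rewrite !mxE; ring.
Qed.
Lemma T3D3 (R : comNzRingType) (c : cubic R) (a1 a2 b d : 'rV[R]_4) :
  T3 c b d (a1 + a2) = T3 c b d a1 + T3 c b d a2.
Proof.
rewrite /T3 -big_split; apply: eq_bigr => i _; rewrite -big_split.
apply: eq_bigr => j _; rewrite -big_split; apply: eq_bigr => k _ /=.
rewrite !mxE; ring.
Qed.
Lemma T3Z1 (R : comNzRingType) (c : cubic R) (s : R) (a b d : 'rV[R]_4) :
  T3 c (s *: a) b d = s * T3 c a b d.
Proof.
rewrite /T3 mulr_sumr; apply: eq_bigr => i _; rewrite mulr_sumr.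
apply: eq_bigr => j _; rewrite mulr_sumr; apply: eq_bigr => k _ /=.
rewrite !mxE; ring.
Qed.
Lemma T3Z2 (R : comNzRingType) (c : cubic R) (s : R) (a b d : 'rV[R]_4) :
  T3 c b (s *: a) d = s * T3 c b a d.
Proof.
rewrite /T3 mulr_sumr; apply: eq_bigr => i _; rewrite mulr_sumr.
apply: eq_bigr => j _; rewrite mulr_sumr; apply: eq_bigr => k _ /=.
rewrite !mxE; ring.
Qed.
Lemma T3Z3 (R : comNzRingType) (c : cubic R) (s : R) (a b d : 'rV[R]_4) :
  T3 c b d (s *: a) = s * T3 c b d a.
Proof.
rewrite /T3 mulr_sumr; apply: eq_bigr => i _; rewrite mulr_sumr.
apply: eq_bigr => j _; rewrite mulr_sumr; apply: eq_bigr => k _ /=.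
rewrite !mxE; ring.
Qed.

Lemma QbD1 (R : comNzRingType) (q : quad R) (a1 a2 b : 'rV[R]_4) :
  Qb q (a1 + a2) b = Qb q a1 b + Qb q a2 b.
Proof.
rewrite /Qb -big_split; apply: eq_bigr => i _; rewrite -big_split.
apply: eq_bigr => j _ /=; rewrite !mxE; ring.
Qed.
Lemma QbD2 (R : comNzRingType) (q : quad R) (a1 a2 b : 'rV[R]_4) :
  Qb q b (a1 + a2) = Qb q b a1 + Qb q b a2.
Proof.
rewrite /Qb -big_split; apply: eq_bigr => i _; rewrite -big_split.
apply: eq_bigr => j _ /=; rewrite !mxE; ring.
Qed.
Lemma QbZ1 (R : comNzRingType) (q : quad R) (s : R) (a b : 'rV[R]_4) :
  Qb q (s *: a) b = s * Qb q a b.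
Proof.
rewrite /Qb mulr_sumr; apply: eq_bigr => i _; rewrite mulr_sumr.
apply: eq_bigr => j _ /=; rewrite !mxE; ring.
Qed.
Lemma QbZ2 (R : comNzRingType) (q : quad R) (s : R) (a b : 'rV[R]_4) :
  Qb q b (s *: a) = s * Qb q b a.
Proof.
rewrite /Qb mulr_sumr; apply: eq_bigr => i _; rewrite mulr_sumr.
apply: eq_bigr => j _ /=; rewrite !mxE; ring.
Qed.
Lemma levalD (R : comNzRingType) (l a1 a2 : 'rV[R]_4) :
  leval l (a1 + a2) = leval l a1 + leval l a2.
Proof. rewrite /leval -big_split; apply: eq_bigr => i _ /=; rewrite !mxE; ring. Qed.
Lemma levalZ (R : comNzRingType) (l a : 'rV[R]_4) (s : R) :
  leval l (s *: a) = s * leval l a.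
Proof. rewrite /leval mulr_sumr; apply: eq_bigr => i _ /=; rewrite !mxE; ring. Qed.
Lemma levalDl (R : comNzRingType) (l1 l2 a : 'rV[R]_4) :
  leval (l1 + l2) a = leval l1 a + leval l2 a.
Proof. rewrite /leval -big_split; apply: eq_bigr => i _ /=; rewrite !mxE; ring. Qed.
Lemma levalZl (R : comNzRingType) (l a : 'rV[R]_4) (s : R) :
  leval (s *: l) a = s * leval l a.
Proof. rewrite /leval mulr_sumr; apply: eq_bigr => i _ /=; rewrite !mxE; ring. Qed.
Lemma levalNl (R : comNzRingType) (l a : 'rV[R]_4) :
  leval (- l) a = - leval l a.
Proof. rewrite -scaleN1r levalZl; ring. Qed.

Lemma pick4 (R : comNzRingType) (i : 'I_4) (g : 'I_4 -> R) :
  \sum_(m < 4) (i == m)%:R * g m = g i.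
Proof.
rewrite (bigD1 i) //= eqxx mul1r big1 ?addr0 // => m.
by rewrite eq_sym => /negbTE ->; rewrite mul0r.
Qed.

Lemma gradE (R : comNzRingType) (c : cubic R) (y z : 'rV[R]_4) :
  leval (grad c y) z = T3 c z y y + T3 c y z y + T3 c y y z.
Proof.
rewrite /leval /T3 -!big_split /=.
under eq_bigr => m _ do rewrite mxE /cderiv !mulr_suml.
rewrite exchange_big; apply: eq_bigr => i _.
under eq_bigr => m _ do rewrite !mulr_suml.
rewrite -!big_split /= exchange_big; apply: eq_bigr => j _.
under eq_bigr => m _ do rewrite mulr_suml.
rewrite -!big_split /= exchange_big; apply: eq_bigr => k _ /=.
transitivity (\sum_(m < 4) ((c i j k * y 0 j * y 0 k) * ((i == m)%:R * z 0 m)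
   + (c i j k * y 0 i * y 0 k) * ((j == m)%:R * z 0 m)
   + (c i j k * y 0 i * y 0 j) * ((k == m)%:R * z 0 m))).
  by apply: eq_bigr => m _; ring.
rewrite !big_split /= -!mulr_sumr !pick4; ring.
Qed.
Lemma cevalT (R : comNzRingType) (c : cubic R) y : ceval c y = T3 c y y y.
Proof. by []. Qed.
Lemma qevalQ (R : comNzRingType) (q : quad R) y : qeval q y = Qb q y y.
Proof. by []. Qed.

Lemma ceval_comb (R : comNzRingType) (c : cubic R) (s t : R) (y z : 'rV[R]_4) :
  ceval c (s *: y + t *: z) = s ^+ 3 * ceval c y + s ^+ 2 * t * leval (grad c y) z
    + s * t ^+ 2 * leval (grad c z) y + t ^+ 3 * ceval c z.
Proof.
rewrite !gradE !cevalT !(T3D1, T3D2, T3D3, T3Z1, T3Z2, T3Z3); ring.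
Qed.

Lemma qeval_comb (R : comNzRingType) (q : quad R) (s t : R) (y z : 'rV[R]_4) :
  qeval q (s *: y + t *: z) = s ^+ 2 * qeval q y + s * t * (Qb q y z + Qb q z y)
    + t ^+ 2 * qeval q z.
Proof.
rewrite !qevalQ !(QbD1, QbD2, QbZ1, QbZ2); ring.
Qed.

Lemma line_D (L : closedFieldType) (c : cubic L) (B : 'M[L]_(2,4)) (y z : 'rV[L]_4) :
  line_on c B -> (y <= B)%MS -> (z <= B)%MS ->
  [/\ leval (grad c y) z = 0, leval (grad c z) y = 0, ceval c y = 0 & ceval c z = 0].
Proof.
move=> [_ HB] yB zB.
have H t : ceval c y + leval (grad c y) z * t + leval (grad c z) y * t ^+ 2
    + ceval c z * t ^+ 3 = 0.
  have sB : ((1 *: y + t *: z)%R <= B)%MS by apply: addmx_sub; apply: scalemx_sub.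
  have := HB _ sB; rewrite ceval_comb => <-; rewrite !expr1n; ring.
by have [-> -> -> ->] := cubic0 H.
Qed.
Lemma mx11_eq0 (F : fieldType) (M : 'M[F]_1) : (M == 0) = (M 0 0 == 0).
Proof.
apply/eqP/eqP => [->|H]; first by rewrite mxE.
by apply/matrixP => i j; rewrite !ord1 H mxE.
Qed.

Lemma leval_mx (R : comNzRingType) (a y : 'rV[R]_4) : leval a y = (y *m a^T) 0 0.
Proof. by rewrite /leval !mxE; apply: eq_bigr => i _; rewrite mxE mulrC. Qed.

Lemma ker1 (F : fieldType) (a y : 'rV[F]_4) :
  (y <= kermx a^T)%MS = (leval a y == 0).
Proof. by rewrite sub_kermx mx11_eq0 leval_mx. Qed.

Lemma ker2 (F : fieldType) (a b y : 'rV[F]_4) :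
  (y <= kermx (col_mx a b)^T)%MS = (leval a y == 0) && (leval b y == 0).
Proof. by rewrite sub_kermx tr_col_mx mul_mx_row row_mx_eq0 !mx11_eq0 !leval_mx. Qed.

Lemma mul11 (F : fieldType) n (u : 'M[F]_1) (v : 'rV[F]_n) : u *m v = u 0 0 *: v.
Proof. by rewrite {1}[u]mx11_scalar mul_scalar_mx. Qed.

Lemma sub_rV (F : fieldType) n (y x : 'rV[F]_n) : (y <= x)%MS -> exists a, y = a *: x.
Proof. by case/submxP => D ->; exists (D 0 0); rewrite mul11. Qed.

Lemma decomp2 (F : fieldType) n m1 (w : 'rV[F]_n) (A : 'M[F]_(m1, n)) (y : 'rV[F]_n) :
  (w <= A + y)%MS -> exists u b, (u <= A)%MS /\ w = u + b *: y.
Proof.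
case/sub_addsmxP => [[u1 u2]] /= ->.
by exists (u1 *m A), (u2 0 0); rewrite submxMl mul11.
Qed.

Lemma rank_add1 (F : fieldType) n m1 (A : 'M[F]_(m1, n)) (z : 'rV[F]_n) :
  ~~ (z <= A)%MS -> \rank (A + z)%MS = (\rank A).+1.
Proof.
move=> nzA.
have z0 : z != 0 by apply: contraNneq nzA => ->; rewrite sub0mx.
have := mxrank_sum_cap A z; rewrite rank_rV z0.
have le1 : (\rank (A :&: z)%MS <= \rank z)%N by apply: mxrankS; apply: capmxSr.
move: le1; rewrite rank_rV z0.
case E: (\rank (A :&: z)%MS) => [|k] //=; first by rewrite addn0 addn1.
rewrite ltnS leqn0 => /eqP k0; move: E; rewrite k0 => E.
have e : \rank z = \rank (A :&: z)%MS by rewrite rank_rV z0 E.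
have := mxrank_leqif_sup (capmxSr A z); rewrite e => [[_]]; rewrite eqxx => /esym sz.
by move: nzA; rewrite (submx_trans sz (capmxSl _ _)).
Qed.

Lemma exists_out (F : fieldType) n m1 (B : 'M[F]_(m1, n)) (x : 'rV[F]_n) :
  (1 < \rank B)%N -> exists y : 'rV[F]_n, (y <= B)%MS /\ ~~ (y <= x)%MS.
Proof.
move=> rB.
have : ~~ (B <= x)%MS.
  apply/negP => Bx; have := mxrankS Bx; rewrite rank_rV.
  by case: (x != 0) => /= H; move: (leq_trans rB H).
case/row_subPn => i Hi; exists (row i B); split => //; exact: row_sub.
Qed.

Lemma span_eq (F : fieldType) n m1 (B : 'M[F]_(m1, n)) (x y : 'rV[F]_n) :
  (x <= B)%MS -> (y <= B)%MS -> \rank B = 2%N -> x != 0 -> ~~ (y <= x)%MS ->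
  (B <= x + y)%MS.
Proof.
move=> xB yB rB x0 yx.
have r2 : \rank (x + y)%MS = 2%N by rewrite rank_add1 // rank_rV x0.
have s : (x + y <= B)%MS by rewrite addsmx_sub xB yB.
have := mxrank_leqif_sup s; rewrite r2 rB => [[_]]; rewrite eqxx => /esym.
by [].
Qed.

Lemma eq_of_sub (F : fieldType) n (B1 B2 : 'M[F]_(2, n)) :
  \rank B1 = 2%N -> \rank B2 = 2%N -> (B2 <= B1)%MS -> (B1 == B2)%MS.
Proof.
move=> r1 r2 s; have := mxrank_leqif_sup s; rewrite r1 r2 => [[_]].
by rewrite eqxx => /esym H; rewrite /eqmx H s.
Qed.
Definition rowL (R : comNzRingType) (q : quad R) (U : 'rV[R]_4) : 'rV[R]_4 :=
  \row_j \sum_(i < 4) q i j * U 0 i.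
Definition rowR (R : comNzRingType) (q : quad R) (U : 'rV[R]_4) : 'rV[R]_4 :=
  \row_i \sum_(j < 4) q i j * U 0 j.
Definition evec (R : comNzRingType) (q : quad R) (l n U V : 'rV[R]_4) : 'rV[R]_4 :=
  rowL q U + rowR q U - Qb q U U *: l - Qb q V U *: n.
Definition bvec (R : comNzRingType) (q : quad R) (l n U V : 'rV[R]_4) : 'rV[R]_4 :=
  rowL q V + rowR q V - Qb q U V *: l - Qb q V V *: n.

Lemma rowLE (R : comNzRingType) (q : quad R) (U y : 'rV[R]_4) :
  leval (rowL q U) y = Qb q U y.
Proof.
rewrite /leval /Qb exchange_big; apply: eq_bigr => j _.
by rewrite mxE mulr_suml; apply: eq_bigr => i _.
Qed.
Lemma rowRE (R : comNzRingType) (q : quad R) (U y : 'rV[R]_4) :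
  leval (rowR q U) y = Qb q y U.
Proof.
rewrite /leval /Qb; apply: eq_bigr => i _.
rewrite mxE mulr_suml; apply: eq_bigr => j _; ring.
Qed.

Lemma levalBl (R : comNzRingType) (l1 l2 a : 'rV[R]_4) :
  leval (l1 - l2) a = leval l1 a - leval l2 a.
Proof. by rewrite levalDl levalNl. Qed.

Lemma fact_id (R : comNzRingType) (q : quad R) (l n U V w : 'rV[R]_4) (a b : R) :
  qeval q w = 0 ->
  leval l (w + a *: U + b *: V) = a -> leval n (w + a *: U + b *: V) = b ->
  qeval q (w + a *: U + b *: V) =
    leval n (w + a *: U + b *: V) * leval (bvec q l n U V) (w + a *: U + b *: V)
    + leval l (w + a *: U + b *: V) * leval (evec q l n U V) (w + a *: U + b *: V).
Proof.
move=> qw la nb.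
rewrite /bvec /evec !(levalBl, levalDl, levalNl, levalZl, rowLE, rowRE) la nb.
move: qw; rewrite !qevalQ !(QbD1, QbD2, QbZ1, QbZ2) => qw.
rewrite qw; ring.
Qed.

Lemma leval_map (K L : fieldType) (f : {rmorphism K -> L}) (a y : 'rV[K]_4) :
  leval (map_mx f a) (map_mx f y) = f (leval a y).
Proof. by rewrite /leval rmorph_sum; apply: eq_bigr => i _; rewrite !mxE rmorphM. Qed.

Lemma Qb_map (K L : fieldType) (f : {rmorphism K -> L}) (q : quad K) (a y : 'rV[K]_4) :
  Qb (qmap f q) (map_mx f a) (map_mx f y) = f (Qb q a y).
Proof.
rewrite /Qb rmorph_sum; apply: eq_bigr => i _; rewrite rmorph_sum.
by apply: eq_bigr => j _; rewrite !mxE !rmorphM.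
Qed.

Lemma rowL_map (K L : fieldType) (f : {rmorphism K -> L}) (q : quad K) (a : 'rV[K]_4) :
  rowL (qmap f q) (map_mx f a) = map_mx f (rowL q a).
Proof.
apply/rowP => j; rewrite !mxE rmorph_sum; apply: eq_bigr => i _.
by rewrite !mxE rmorphM.
Qed.
Lemma rowR_map (K L : fieldType) (f : {rmorphism K -> L}) (q : quad K) (a : 'rV[K]_4) :
  rowR (qmap f q) (map_mx f a) = map_mx f (rowR q a).
Proof.
apply/rowP => j; rewrite !mxE rmorph_sum; apply: eq_bigr => i _.
by rewrite !mxE rmorphM.
Qed.

Lemma evec_map (K L : fieldType) (f : {rmorphism K -> L}) (q : quad K) (l n U V : 'rV[K]_4) :
  evec (qmap f q) (map_mx f l) (map_mx f n) (map_mx f U) (map_mx f V)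
  = map_mx f (evec q l n U V).
Proof.
by rewrite /evec !Qb_map rowL_map rowR_map !map_mxD !map_mxN !map_mxZ.
Qed.
Lemma bvec_map (K L : fieldType) (f : {rmorphism K -> L}) (q : quad K) (l n U V : 'rV[K]_4) :
  bvec (qmap f q) (map_mx f l) (map_mx f n) (map_mx f U) (map_mx f V)
  = map_mx f (bvec q l n U V).
Proof.
by rewrite /bvec !Qb_map rowL_map rowR_map !map_mxD !map_mxN !map_mxZ.
Qed.
Lemma factor (K L : fieldType) (f : {rmorphism K -> L}) (q : quad K) (l n : 'rV[K]_4) :
  \rank (col_mx l n) = 2%N ->
  (forall y : 'rV[L]_4, leval (map_mx f l) y = 0 -> leval (map_mx f n) y = 0 ->
     qeval (qmap f q) y = 0) ->
  exists b e : 'rV[K]_4, forall y : 'rV[L]_4,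
    qeval (qmap f q) y = leval (map_mx f n) y * leval (map_mx f b) y
      + leval (map_mx f l) y * leval (map_mx f e) y.
Proof.
move=> r2 Hv.
have : row_full (col_mx l n)^T by rewrite /row_full mxrank_tr r2.
case/row_fullP => B HB.
set U := row 0 B; set V := row 1 B.
have E i j : (B *m (col_mx l n)^T) i j = (1%:M : 'M[K]_2) i j by rewrite HB.
have c0 k : col_mx l n 0 k = l 0 k.
  by rewrite (_ : (0 : 'I_2) = lshift 1 (0 : 'I_1)) ?col_mxEu //; apply: val_inj.
have c1 k : col_mx l n 1 k = n 0 k.
  by rewrite (_ : (1 : 'I_2) = rshift 1 (0 : 'I_1)) ?col_mxEd //; apply: val_inj.
have lU : leval l U = 1.
  move: (E 0 0); rewrite !mxE /= => H; apply: (etrans _ H); rewrite /leval; apply: eq_bigr => k _.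
  by rewrite [(col_mx l n)^T k 0]mxE c0 [U 0 k]mxE mulrC.
have lV : leval l V = 0.
  move: (E 1 0); rewrite !mxE /= => H; apply: (etrans _ H); rewrite /leval; apply: eq_bigr => k _.
  by rewrite [(col_mx l n)^T k 0]mxE c0 [V 0 k]mxE mulrC.
have nU : leval n U = 0.
  move: (E 0 1); rewrite !mxE /= => H; apply: (etrans _ H); rewrite /leval; apply: eq_bigr => k _.
  by rewrite [(col_mx l n)^T k 1]mxE c1 mxE mulrC.
have nV : leval n V = 1.
  move: (E 1 1); rewrite !mxE /= => H; apply: (etrans _ H); rewrite /leval; apply: eq_bigr => k _.
  by rewrite [(col_mx l n)^T k 1]mxE c1 mxE mulrC.
exists (bvec q l n U V), (evec q l n U V) => y.
set a := leval (map_mx f l) y; set b := leval (map_mx f n) y.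
set w := y - a *: map_mx f U - b *: map_mx f V.
have ey : y = w + a *: map_mx f U + b *: map_mx f V.
  by rewrite /w addrAC subrK subrK.
have la : leval (map_mx f l) w = 0.
  rewrite /w !(levalD, levalZ, levalNl, leval_map) -!scaleNr !levalZ !leval_map.
  rewrite lU lV rmorph1 rmorph0; rewrite /a; ring.
have nb : leval (map_mx f n) w = 0.
  rewrite /w !(levalD, levalZ, levalNl, leval_map) -!scaleNr !levalZ !leval_map.
  rewrite nU nV rmorph1 rmorph0; rewrite /b; ring.
have qw : qeval (qmap f q) w = 0 by apply: Hv.
rewrite -bvec_map -evec_map.
have H1 : leval (map_mx f l) (w + a *: map_mx f U + b *: map_mx f V) = a by rewrite -ey.
have H2 : leval (map_mx f n) (w + a *: map_mx f U + b *: map_mx f V) = b by rewrite -ey.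
have := fact_id qw H1 H2; rewrite H1 H2 -ey; exact.
Qed.
Definition P3 (R : comNzRingType) (c : cubic R) (x y z : 'rV[R]_4) : R :=
  T3 c x y z + T3 c x z y + T3 c y x z + T3 c z x y + T3 c y z x + T3 c z y x.

Lemma hexp (R : comNzRingType) (c : cubic R) (a b d : R) (x y z : 'rV[R]_4) :
  leval (grad c (a *: x + b *: y + d *: z)) x =
  3%:R * a ^+ 2 * ceval c x + 2%:R * a * (b * leval (grad c x) y + d * leval (grad c x) z)
  + b ^+ 2 * leval (grad c y) x + b * d * P3 c x y z + d ^+ 2 * leval (grad c z) x.
Proof.
rewrite /P3 !gradE !cevalT !(T3D1, T3D2, T3D3, T3Z1, T3Z2, T3Z3); ring.
Qed.

Lemma decomp3 (F : fieldType) (w x y1 y2 : 'rV[F]_4) :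
  (w <= (x + y1) + y2)%MS -> exists a b d, w = a *: x + b *: y1 + d *: y2.
Proof.
case/decomp2 => u [d [uS ->]].
case/decomp2: uS => u' [b [u'x ->]].
case/sub_rV: u'x => a ->.
by exists a, b, d.
Qed.

Lemma core (L : closedFieldType) (c : cubic L) (x : 'rV[L]_4) :
  grad c x != 0 -> eckardt c x ->
  forall w, leval (grad c x) w = 0 -> leval (grad c w) x = 0.
Proof.
move=> mu0 [x0 [B1 [B2 [B3 [l1 l2 l3 [xB1 xB2 xB3] [n12 n13 n23]]]]]].
have r1 : \rank B1 = 2%N by case: l1.
have r2 : \rank B2 = 2%N by case: l2.
have r3 : \rank B3 = 2%N by case: l3.
have [y1 [y1B y1x]] := exists_out x (ltac:(by rewrite r1) : (1 < \rank B1)%N).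
have [y2 [y2B y2x]] := exists_out x (ltac:(by rewrite r2) : (1 < \rank B2)%N).
have [y3 [y3B y3x]] := exists_out x (ltac:(by rewrite r3) : (1 < \rank B3)%N).

have [mx _ Fx _] := line_D l1 xB1 xB1.
have [m1 h1 _ _] := line_D l1 xB1 y1B.
have [m2 h2 _ _] := line_D l2 xB2 y2B.
have [m3 h3 _ _] := line_D l3 xB3 y3B.
have S1 := span_eq xB1 y1B r1 x0 y1x.
have S2 := span_eq xB2 y2B r2 x0 y2x.
have S3 := span_eq xB3 y3B r3 x0 y3x.
have xS1 : (x + y1 <= B1)%MS by rewrite addsmx_sub xB1 y1B.
have xS2 : (x + y2 <= B2)%MS by rewrite addsmx_sub xB2 y2B.
have xS3 : (x + y3 <= B3)%MS by rewrite addsmx_sub xB3 y3B.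
have y2S1 : ~~ (y2 <= x + y1)%MS.
  apply/negP => H; move: n12; rewrite eq_of_sub //.
  apply: submx_trans S2 _; apply: submx_trans _ xS1.
  by rewrite addsmx_sub addsmxSl H.
have rS1 : \rank (x + y1)%MS = 2%N by rewrite rank_add1 // rank_rV x0.
have rS : \rank (x + y1 + y2)%MS = 3%N by rewrite rank_add1 // rS1.
have rK : \rank (kermx (grad c x)^T) = 3%N by rewrite mxrank_ker mxrank_tr rank_rV mu0.
have SK : ((x + y1) + y2 <= kermx (grad c x)^T)%MS.
  by rewrite !addsmx_sub !ker1 mx m1 m2 eqxx.
have KS : (kermx (grad c x)^T <= (x + y1) + y2)%MS.
  have := mxrank_leqif_sup SK; rewrite rS rK => [[_]]; rewrite eqxx => /esym.
  by [].
have y3K : (y3 <= kermx (grad c x)^T)%MS by rewrite ker1 m3.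
have [a3 [b3 [d3 e3]]] := decomp3 (submx_trans y3K KS).
have Hh : forall a b d, leval (grad c (a *: x + b *: y1 + d *: y2)) x
    = b * d * P3 c x y1 y2.
  by move=> a b d; rewrite hexp Fx m1 m2 h1 h2; ring.
have b30 : b3 != 0.
  apply/eqP => b30; move: n23; rewrite eq_of_sub //.
  apply: submx_trans S3 _; apply: submx_trans _ xS2.
  rewrite addsmx_sub addsmxSl e3 b30 scale0r addr0.
  apply: addmx_sub; apply: scalemx_sub; [exact: addsmxSl | exact: addsmxSr].
have d30 : d3 != 0.
  apply/eqP => d30; move: n13; rewrite eq_of_sub //.
  apply: submx_trans S3 _; apply: submx_trans _ xS1.
  rewrite addsmx_sub addsmxSl e3 d30 scale0r addr0.
  apply: addmx_sub; apply: scalemx_sub; [exact: addsmxSl | exact: addsmxSr].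
have P0 : P3 c x y1 y2 = 0.
  move: h3; rewrite e3 Hh => /eqP; rewrite !mulf_eq0 (negbTE b30) (negbTE d30) /=.
  by move/eqP.
move=> w mw.
have wK : (w <= kermx (grad c x)^T)%MS by rewrite ker1 mw.
have [a [b [d ->]]] := decomp3 (submx_trans wK KS).
by rewrite Hh P0 mulr0.
Qed.
Lemma grad_map (K L : fieldType) (f : {rmorphism K -> L}) (c : cubic K) (p : 'rV[K]_4) :
  map_mx f (grad c p) = grad (cmap f c) (map_mx f p).
Proof.
apply/rowP => m; rewrite !mxE /cderiv rmorph_sum; apply: eq_bigr => i _.
rewrite rmorph_sum; apply: eq_bigr => j _; rewrite rmorph_sum; apply: eq_bigr => k _.
by rewrite /cmap !mxE !(rmorphM, rmorphD, rmorph_nat).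
Qed.

Lemma leval_delta (R : comNzRingType) (a : 'rV[R]_4) (i : 'I_4) :
  leval a (delta_mx 0 i) = a 0 i.
Proof.
rewrite /leval (bigD1 i) //= mxE !eqxx mulr1 big1 ?addr0 // => j ji.
by rewrite mxE (negbTE ji) andbF mulr0.
Qed.

Lemma leval_inj (R : comNzRingType) (a b : 'rV[R]_4) :
  (forall z, leval a z = leval b z) -> a = b.
Proof. by move=> H; apply/rowP => i; rewrite -!leval_delta H. Qed.

Lemma grad_scale (R : comNzRingType) (c : cubic R) (s : R) (x : 'rV[R]_4) :
  grad c (s *: x) = s ^+ 2 *: grad c x.
Proof.
apply: leval_inj => z; rewrite levalZl !gradE !(T3Z1, T3Z2, T3Z3); ring.
Qed.
Unset Implicit Arguments.

Theorem mainTheorem7 (K : fieldType) (L : closedFieldType)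
  (f : {rmorphism K -> L}) (c : cubic K)
  (A A' : 'M[K]_(2,4)) (p : 'rV[K]_4) :
  smooth_cubic (cmap f c) ->
  Kline_on f c A -> Kline_on f c A' ->
  skew_lines (map_mx f A) (map_mx f A') ->
  p != 0 -> (p <= A)%MS ->
  section_line_plus_Kirred_conic f c p A ->
  forall x : 'rV[L]_4, x != 0 ->
    (x <= map_mx f A')%MS -> leval (map_mx f (grad c p)) x = 0 ->
    ~ eckardt (cmap f c) x.
Proof.
move=> smooth [rA lA] [rA' lA'] skew p0 pA [m [q [g [rk AmT Fid nirr]]]] x x0 xA' lx E.
set cL := cmap f c in smooth lA lA' Fid E.
set lam := grad c p in rk Fid nirr lx.
have rAL : \rank (map_mx f A) = 2%N by rewrite mxrank_map.
have rA'L : \rank (map_mx f A') = 2%N by rewrite mxrank_map.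
have lam0 : lam != 0.
  apply/eqP => l0.
  have s : (col_mx lam m <= m)%MS by rewrite col_mx_sub l0 sub0mx submx_refl.
  by have := mxrankS s; rewrite rank_rV rk; case: (m != 0).
have lamA : forall y, (y <= map_mx f A)%MS -> leval (map_mx f lam) y = 0.
  move=> y yA; rewrite /lam grad_map.
  have pAL : (map_mx f p <= map_mx f A)%MS by rewrite map_submx.
  by have [-> _ _ _] := line_D lA pAL yA.
have mA : forall y, (y <= map_mx f A)%MS -> leval (map_mx f m) y = 0.
  move=> y /submxP[D ->]; rewrite leval_mx -mulmxA map_trmx.
  by rewrite -map_mxM AmT map_mx0 mulmx0 mxE.
have [_ _ Fx _] := line_D lA' xA' xA'.
have mx0 : leval (map_mx f m) x != 0.
  apply/eqP => mx.
  set N := col_mx (map_mx f lam) (map_mx f m).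
  have rN : \rank N = 2%N by rewrite /N -map_col_mx mxrank_map.
  have rK : \rank (kermx N^T) = 2%N by rewrite mxrank_ker mxrank_tr rN.
  have AK : (map_mx f A <= kermx N^T)%MS.
    by apply/row_subP => i; rewrite ker2 lamA ?mA ?row_sub ?eqxx.
  have KA : (kermx N^T <= map_mx f A)%MS.
    by have := mxrank_leqif_sup AK; rewrite rK rAL => [[_]]; rewrite eqxx => /esym.
  have xK : (x <= kermx N^T)%MS by rewrite ker2 lx mx eqxx.
  by move/eqP: x0; apply; apply: skew (submx_trans xK KA) xA'.
have qx : qeval (qmap f q) x = 0.
  move: (Fid x); rewrite Fx lx mul0r addr0 => /esym/eqP.
  by rewrite mulf_eq0 (negbTE mx0) => /eqP.
have : [exists i : 'I_2, leval (map_mx f lam) (row i (map_mx f A')) != 0].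
  apply: contraT => /existsPn H.
  set Kl := kermx (map_mx f lam)^T.
  have rKl : \rank Kl = 3%N by rewrite mxrank_ker mxrank_tr rank_rV map_mx_eq0 lam0.
  have AK : (map_mx f A <= Kl)%MS by apply/row_subP => i; rewrite ker1 lamA ?row_sub.
  have A'K : (map_mx f A' <= Kl)%MS.
    by apply/row_subP => i; rewrite ker1; move: (H i); rewrite negbK.
  have sum := mxrank_sum_cap (map_mx f A) (map_mx f A'); rewrite rAL rA'L in sum.
  have sK : (map_mx f A + map_mx f A' <= Kl)%MS by rewrite addsmx_sub AK A'K.
  have le3 := mxrankS sK; rewrite rKl in le3.
  have : (\rank (map_mx f A :&: map_mx f A')%MS != 0)%N.
    by apply/eqP => e; move: sum; rewrite e addn0 => e'; move: le3; rewrite e'.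
  rewrite mxrank_eq0 -submx0 => /row_subPn [i Hi].
  rewrite submx0 in Hi.
  by rewrite (skew _ (submx_trans (row_sub _ _) (capmxSl _ _))
    (submx_trans (row_sub _ _) (capmxSr _ _))) eqxx in Hi.
case/existsP => i0 li0.
have lK : leval lam (row i0 A') != 0.
  by move: li0; rewrite -map_row leval_map; apply: contraNneq => ->; rewrite rmorph0.
set Kl := kermx lam^T.
set CK := (A' :&: Kl)%MS.
have rKl : \rank Kl = 3%N by rewrite mxrank_ker mxrank_tr rank_rV lam0.
have rCK : \rank CK = 1%N.
  have nr : ~~ (row i0 A' <= Kl)%MS by rewrite ker1.
  have r4 : \rank (Kl + row i0 A')%MS = 4%N by rewrite rank_add1 // rKl.
  have s4 : (Kl + row i0 A' <= A' + Kl)%MS.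
    by rewrite addsmx_sub addsmxSr (submx_trans (row_sub _ _) (addsmxSl _ _)).
  have e4 : \rank (A' + Kl)%MS = 4%N.
    by have := mxrankS s4; rewrite r4 => h; apply/eqP; rewrite eqn_leq rank_leq_col h.
  have := mxrank_sum_cap A' Kl; rewrite e4 rA' rKl -/CK => h.
  by apply/eqP; rewrite -(eqn_add2l 4) h.
have xC : (x <= map_mx f CK)%MS.
  by rewrite map_capmx sub_capmx xA' map_kermx /= -map_trmx ker1 lx.
have CK0 : CK != 0.
  by apply/negP => /eqP C0; move: xC; rewrite C0 map_mx0 submx0 (negbTE x0).
have [i1 Hi1] : exists i, row i CK != 0.
  by move: CK0; rewrite -submx0 => /row_subPn [i Hi]; exists i; rewrite -submx0.
set x0v := row i1 CK.
have fx0 : (map_mx f x0v <= map_mx f CK)%MS by rewrite map_submx row_sub.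
have CKx : (map_mx f CK <= map_mx f x0v)%MS.
  have := mxrank_leqif_sup fx0; rewrite !mxrank_map rCK rank_rV Hi1 => [[_]].
  by rewrite eqxx => /esym.
have [s xs] := sub_rV (submx_trans xC CKx).
have s0 : s != 0 by apply: contraNneq x0 => s0'; rewrite xs s0' scale0r.
set nu := grad c x0v.
have mu_eq : grad cL x = s ^+ 2 *: map_mx f nu by rewrite xs grad_scale /nu grad_map.
have mu0 : grad cL x != 0 by apply: smooth.
have yA' : (row i0 (map_mx f A') <= map_mx f A')%MS by apply: row_sub.
have [Dy _ _ _] := line_D lA' xA' yA'.
have nu_n : ~~ (nu <= lam)%MS.
  apply/negP; rewrite -(map_submx f) => /sub_rV [k hk].
  move: Dy; rewrite mu_eq hk !levalZl => /eqP.
  rewrite mulf_eq0 sqrf_eq0 (negbTE s0) /= mulf_eq0 (negbTE li0) orbF => /eqP k0.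
  by move: mu0; rewrite mu_eq hk k0 scale0r scaler0 eqxx.
have rk2 : \rank (col_mx lam nu) = 2%N by rewrite -addsmxE rank_add1 // rank_rV lam0.
have hc := core mu0 E.
have Hv : forall y, leval (map_mx f lam) y = 0 -> leval (map_mx f nu) y = 0 ->
    qeval (qmap f q) y = 0.
  move=> y ly ny.
  have my : leval (grad cL x) y = 0 by rewrite mu_eq levalZl ny mulr0.
  have hy := hc y my.
  set Mx := leval (map_mx f m) x; set My := leval (map_mx f m) y.
  set B := Qb (qmap f q) x y + Qb (qmap f q) y x.
  set Qy := qeval (qmap f q) y.
  have Ht t : (ceval cL y - My * Qy) + (- (Mx * Qy + My * B)) * t + (- (Mx * B)) * t ^+ 2
      + 0 * t ^+ 3 = 0.
    have H := Fid (t *: x + 1 *: y).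
    rewrite ceval_comb qeval_comb !levalD !levalZ Fx my hy qx lx ly in H.
    have -> : ceval cL y = (t * Mx + My) * (t * B + Qy).
      by apply: (etrans _ (etrans H _)); rewrite /Mx /My /B /Qy; ring.
    ring.
  have [_ h1 h2 _] := cubic0 Ht.
  have B0 : B = 0.
    by move/eqP: h2; rewrite oppr_eq0 mulf_eq0 (negbTE mx0) => /eqP.
  by move/eqP: h1; rewrite B0 mulr0 addr0 oppr_eq0 mulf_eq0 (negbTE mx0) => /eqP.
have [b [e He]] := factor rk2 Hv.
by apply: nirr; exists nu, b, e.
Qed.
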